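(* Let $P, A, B, C$ be points in the Euclidean plane, let $r>0$ and let $Z=\{Q:|PQ|\le r\}$. Let $P^*\in Z$ be a solution of the Max-Min-Angle problem, i.e. a point of $Z$ maximizing, over $Q\in Z$, the smallest of the angles $\angle AQB,\angle BQC,\angle CQA$ (non-reflex angles in $[0,\pi]$). Suppose there are exactly two smallest angles around $P^*$, i.e. among the three angles between consecutive rays $P^*A,P^*B,P^*C$ (in counterclockwise order), two are equal and strictly smaller than the third. Then $P^*$ can be computed by solving a polynomial equation of degree at most four; that is, the coordinates of $P^*$ can be obtained from the coordinates of $P,A,B,C$ and from $r$ by finitely many field operations, square roots, and taking a root of a polynomial of degree at most four.
   Context: This is the Max-Min-Angle problem for a graph vertex of degree three: $P$ is the current position of the vertex, $A,B,C$ the positions of its neighbours, and the vertex may be moved to any point at distance at most $r$ from $P$, the aim being to maximize the smallest angle between incident edges. *)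

(* Defs.v *)
From HB Require Import structures.
From mathcomp Require Import all_boot all_order all_algebra.
From mathcomp Require Import reals trigo.
Set Implicit Arguments. Unset Strict Implicit. Unset Printing Implicit Defensive.
Import Order.TTheory GRing.Theory Num.Theory.
Local Open Scope ring_scope.

Section Defs.
Variable R : realType.
Notation pt := (R * R)%type.

Definition vsub (X Q : pt) : pt := (X.1 - Q.1, X.2 - Q.2).
Definition dot (u v : pt) : R := u.1 * v.1 + u.2 * v.2.
Definition cross (u v : pt) : R := u.1 * v.2 - u.2 * v.1.
Definition vnorm (u : pt) : R := Num.sqrt (dot u u).
Definition dist (X Y : pt) : R := vnorm (vsub Y X).

(* Non-reflex angle XQY in [0, pi]; convention: 0 if Q = X or Q = Y
   (the angle is then undefined). *)
Definition angle (Q X Y : pt) : R :=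
  let u := vsub X Q in let v := vsub Y Q in
  if (vnorm u == 0) || (vnorm v == 0) then 0
  else acos (dot u v / (vnorm u * vnorm v)).

Definition min_angle (Q A B C : pt) : R :=
  Num.min (angle Q A B) (Num.min (angle Q B C) (angle Q C A)).

Definition in_disk (P : pt) (r : R) (Q : pt) : Prop := dist P Q <= r.

Definition is_MMA_solution (P : pt) (r : R) (A B C Pstar : pt) : Prop :=
  in_disk P r Pstar /\
  forall Q, in_disk P r Q -> min_angle Q A B C <= min_angle Pstar A B C.

Definition ccw_angle (Q X Y : pt) : R :=
  if 0 <= cross (vsub X Q) (vsub Y Q) then angle Q X Y
  else 2 * pi - angle Q X Y.

(* the three angles between consecutive rays QA, QB, QC in ccw order
   (they sum to 2 pi) *)
Definition consecutive_angles (Q A B C : pt) : R * R * R :=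
  if ccw_angle Q A B + ccw_angle Q B C + ccw_angle Q C A == 2 * pi
  then (ccw_angle Q A B, ccw_angle Q B C, ccw_angle Q C A)
  else (ccw_angle Q A C, ccw_angle Q C B, ccw_angle Q B A).

Definition exactly_two_smallest (Q A B C : pt) : Prop :=
  [/\ Q <> A, Q <> B, Q <> C &
    let: (g1, g2, g3) := consecutive_angles Q A B C in
    (g1 = g2 /\ g1 < g3) \/ (g2 = g3 /\ g2 < g1) \/ (g3 = g1 /\ g3 < g2)].

(* gen S x : x lies in the subfield of R generated (over Q) by the list S *)
Inductive gen (S : seq R) : R -> Prop :=
| gen_mem x : x \in S -> gen S x
| gen_one : gen S 1
| gen_sub x y : gen S x -> gen S y -> gen S (x - y)
| gen_mul x y : gen S x -> gen S y -> gen S (x * y)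
| gen_inv x : gen S x -> gen S x^-1.

(* tower S xs q : the numbers xs are obtained successively from the field
   generated by S, each one being either the square root of a nonnegative
   element of the current field, or (only if q = true, and then only once)
   a root of a nonzero polynomial of degree at most four with coefficients
   in the current field. *)
Fixpoint tower (S : seq R) (xs : seq R) (q : bool) : Prop :=
  match xs with
  | [::] => True
  | x :: xs' =>
      ((exists y, [/\ gen S y, 0 <= y & x = Num.sqrt y]) /\ tower (rcons S x) xs' q)
      \/ (q /\ (exists p : {poly R},
             [/\ p != 0, (size p <= 5)%N, (forall i, gen S p`_i) & root p x])
           /\ tower (rcons S x) xs' false)
  end.

Definition computable_deg4 (data : seq R) (X : pt) : Prop :=
  exists xs : seq R, [/\ tower data xs true, gen (data ++ xs) X.1 & gen (data ++ xs) X.2].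

End Defs.

(* Main.v *)
Require Import Defs.
From mathcomp Require Import all_boot all_order all_algebra.
From mathcomp Require Import reals trigo.
From mathcomp Require Import ring lra.
Import Order.TTheory GRing.Theory Num.Theory.
Local Open Scope ring_scope.
Set Implicit Arguments. Unset Strict Implicit. Unset Printing Implicit Defensive.

Lemma acos_ltE (R : realType) (x y : R) : -1 <= x <= 1 -> -1 <= y <= 1 ->
  (acos x < acos y) = (y < x).
Proof.
move=> hx hy.
rewrite -ltr_cos ?acosK ?in_itv //= ?acos_ge0 ?acos_lepi //.
Qed.

Lemma acos_inj (R : realType) (x y : R) : -1 <= x <= 1 -> -1 <= y <= 1 ->
  acos x = acos y -> x = y.
Proof.
move=> hx hy e. by rewrite -(acosK (x:=x)) ?in_itv //= e acosK ?in_itv.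
Qed.

Lemma cs_bound (R : realType) (c s : R) : c ^+ 2 + s ^+ 2 = 1 -> -1 <= c <= 1.
Proof. move=> h; apply/andP; split; nra. Qed.
Definition gccw (R : realType) (c s : R) : R := if 0 <= s then acos c else 2 * pi - acos c.

Lemma sq_eq_pos (R : realType) (a b : R) : a ^+ 2 = b ^+ 2 -> 0 <= a -> 0 <= b -> a = b.
Proof. move=> e ha hb; apply/eqP; rewrite -(eqrXn2 (n:=2)) //; exact/eqP. Qed.

Lemma core_num (R : realType) (c1 s1 c2 s2 : R) :
  c1 ^+ 2 + s1 ^+ 2 = 1 -> c2 ^+ 2 + s2 ^+ 2 = 1 ->
  let c3 := c1 * c2 - s1 * s2 in let s3 := - (c1 * s2 + s1 * c2) in
  gccw c1 s1 = gccw c2 s2 -> gccw c1 s1 < gccw c3 s3 ->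
  (gccw c1 s1 + gccw c2 s2 + gccw c3 s3 = 2 * pi \/
   gccw c3 (- s3) + gccw c2 (- s2) + gccw c1 (- s1) != 2 * pi) ->
  [/\ 0 < s1, 0 < s2, c1 = c2 & c3 < c1].
Proof.
move=> h1 h2 c3 s3.
have b1 := cs_bound h1; have b2 := cs_bound h2.
have h3 : c3 ^+ 2 + s3 ^+ 2 = 1.
  have -> : c3 ^+ 2 + s3 ^+ 2 = (c1 ^+ 2 + s1 ^+ 2) * (c2 ^+ 2 + s2 ^+ 2).
    rewrite /c3 /s3; ring.
  by rewrite h1 h2 mulr1.
have b3 := cs_bound h3.
have pi0 := pi_gt0 R.
have a1l := acos_ge0 b1; have a1u := acos_lepi b1.
have a2l := acos_ge0 b2; have a2u := acos_lepi b2.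
have a3l := acos_ge0 b3; have a3u := acos_lepi b3.
have acpi : forall x : R, -1 <= x <= 1 -> acos x = pi -> x = -1.
  move=> x hx e; by rewrite -(acosK (x:=x)) ?in_itv //= e cospi.
have s0 : forall c s : R, c ^+ 2 + s ^+ 2 = 1 -> c = -1 -> s = 0.
  move=> c s h hc; rewrite hc sqrrN expr1n in h.
  have : s ^+ 2 = 0 by lra.
  by move/eqP; rewrite expf_eq0 /= => /eqP.
rewrite /gccw.
case: (lerP 0 s1) => hs1; case: (lerP 0 s2) => hs2.
- move=> e lt3 _.
  have ec : c1 = c2 by apply: acos_inj.
  subst c2.
  have es : s1 = s2 by apply: sq_eq_pos => //; lra.
  subst s2.
  have ec3 : c3 = 2 * c1 ^+ 2 - 1.
    rewrite /c3 -!expr2; lra.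
  have spos : 0 < s1.
    case: (ltrgtP 0 s1) => // hs; first by lra.
    have c3e : c3 = 1 by rewrite ec3; rewrite -hs expr0n /= in h1; lra.
    have s3e : s3 = 0 by rewrite /s3 -hs !(mulr0, mul0r) addr0 oppr0.
    move: lt3; rewrite c3e s3e lexx acos1; lra.
  have c1lt : c1 < 1.
    case: (ltP c1 1) => // hc; exfalso.
    have : 1 <= c1 ^+ 2 by rewrite expr2; apply: (le_trans hc); rewrite ler_peMr //; lra.
    have : 0 < s1 ^+ 2 by rewrite exprn_gt0.
    lra.
  split => //.
  case: (ltP c3 c1) => // hc.
  exfalso.
  have cneg : c1 < 0.
    rewrite ec3 in hc.
    have : 0 <= (2 * c1 + 1) * (c1 - 1).
      have -> : (2 * c1 + 1) * (c1 - 1) = 2 * c1 ^+ 2 - 1 - c1 by ring.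
      lra.
    move=> hh.
    case: (lerP (2 * c1 + 1) 0) => h; first lra.
    have : (2 * c1 + 1) * (c1 - 1) < 0 by rewrite pmulr_rlt0 //; lra.
    lra.
  have : 0 <= s3.
    have hp : 0 < (- c1) * s1 by rewrite mulr_gt0 //; lra.
    have -> : s3 = 2 * ((- c1) * s1) by rewrite /s3; ring.
    lra.
  move=> hs3; move: lt3; rewrite hs3 acos_ltE //; lra.
- move=> e; exfalso.
  have ea2 : acos c2 = pi by lra.
  have := s0 _ _ h2 (acpi _ b2 ea2). lra.
- move=> e; exfalso.
  have ea : acos c1 = pi by lra.
  have := s0 _ _ h1 (acpi _ b1 ea). lra.
- move=> e lt3 hsum.
  have ea : acos c1 = acos c2 by lra.
  have ec : c1 = c2 by apply: acos_inj.
  subst c2.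
  have es : s1 = s2.
    have : - s1 = - s2 by apply: sq_eq_pos; rewrite ?sqrrN; lra.
    lra.
  subst s2.
  have ec3 : c3 = 2 * c1 ^+ 2 - 1.
    rewrite /c3 -!expr2; lra.
  have hs3 : s3 < 0.
    case: (ltP s3 0) => // hs3; exfalso. move: lt3; rewrite hs3; lra.
  have cneg : c1 < 0.
    case: (ltP c1 0) => // hc; exfalso.
    have hp : c1 * (- s1) >= 0 by rewrite mulr_ge0 //; lra.
    have : s3 = 2 * (c1 * (- s1)) by rewrite /s3; ring.
    lra.
  move: lt3; rewrite leNgt hs3 /= => lt3.
  have hA : acos c3 < acos c1 by lra.
  case: hsum => hsum.
    rewrite leNgt hs3 /= in hsum. lra.
  move: hsum.
  rewrite !oppr_ge0 (ltW hs3) (ltW hs1) /=.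
  have hpi2 : pi / 2 < acos c1.
    rewrite -acos0 acos_ltE //; lra.
  have -> : acos c3 = 2 * pi - 2 * acos c1.
    have hy : - pi <= 2 * acos c1 - 2 * pi <= 0 by apply/andP; split; lra.
    have cy : cos (2 * acos c1 - 2 * pi) = c3.
      rewrite -[LHS](cosD2pi (2 * acos c1 - 2 * pi)).
      have -> : 2 * acos c1 - 2 * pi + pi *+ 2 = (acos c1) *+ 2 by ring.
      rewrite cos_mulr2n acosK ?in_itv //= ec3; ring.
    rewrite -cy cosKN //; ring.
  have -> : 2 * pi - 2 * acos c1 + acos c1 + acos c1 = 2 * pi by ring.
  by rewrite eqxx.
Qed.

Definition cosv (R : realType) (u v : R * R) : R := dot u v / (vnorm u * vnorm v).
Definition sinv (R : realType) (u v : R * R) : R := cross u v / (vnorm u * vnorm v).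

Lemma dot_ge0 (R : realType) (u : R * R) : 0 <= dot u u.
Proof. rewrite /dot; nra. Qed.

Lemma vnorm_sq (R : realType) (u : R * R) : vnorm u ^+ 2 = dot u u.
Proof. by rewrite /vnorm sqr_sqrtr // dot_ge0. Qed.

Lemma vnorm_gt0 (R : realType) (u : R * R) : 0 < dot u u -> 0 < vnorm u.
Proof. by move=> h; rewrite /vnorm sqrtr_gt0. Qed.

Lemma vnormM (R : realType) (u v : R * R) :
  vnorm u * vnorm v = Num.sqrt (dot u u * dot v v).
Proof. by rewrite /vnorm sqrtrM // dot_ge0. Qed.

Lemma lagrange (R : realType) (u v : R * R) :
  dot u v ^+ 2 + cross u v ^+ 2 = dot u u * dot v v.
Proof. rewrite /dot /cross; ring. Qed.

Lemma cs1 (R : realType) (u v : R * R) : 0 < dot u u -> 0 < dot v v ->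
  cosv u v ^+ 2 + sinv u v ^+ 2 = 1.
Proof.
move=> hu hv; rewrite /cosv /sinv !expr_div_n -mulrDl lagrange exprMn !vnorm_sq.
by rewrite divff // mulf_neq0 // gt_eqF.
Qed.

Lemma cosvC (R : realType) (u v : R * R) : cosv v u = cosv u v.
Proof. rewrite /cosv [vnorm v * _]mulrC; congr (_ / _); rewrite /dot; ring. Qed.

Lemma sinvC (R : realType) (u v : R * R) : sinv v u = - sinv u v.
Proof. rewrite /sinv [vnorm v * _]mulrC -mulNr; congr (_ / _); rewrite /cross; ring. Qed.

Lemma cosv_trans (R : realType) (u v w : R * R) : 0 < dot u u -> 0 < dot v v -> 0 < dot w w ->
  cosv u w = cosv u v * cosv v w - sinv u v * sinv v w.
Proof.
move=> hu hv hw.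
have nu := vnorm_gt0 hu; have nv := vnorm_gt0 hv; have nw := vnorm_gt0 hw.
have ev := vnorm_sq v.
rewrite /cosv /sinv.
have -> : dot u v / (vnorm u * vnorm v) * (dot v w / (vnorm v * vnorm w)) -
  cross u v / (vnorm u * vnorm v) * (cross v w / (vnorm v * vnorm w)) =
  (dot u v * dot v w - cross u v * cross v w) / (vnorm u * vnorm v ^+ 2 * vnorm w).
  field; rewrite !gt_eqF //.
have -> : dot u v * dot v w - cross u v * cross v w = dot v v * dot u w.
  rewrite /dot /cross; ring.
rewrite ev -ev; field; rewrite !gt_eqF //.
Qed.

Lemma sinv_trans (R : realType) (u v w : R * R) : 0 < dot u u -> 0 < dot v v -> 0 < dot w w ->
  sinv u w = cosv u v * sinv v w + sinv u v * cosv v w.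
Proof.
move=> hu hv hw.
have nu := vnorm_gt0 hu; have nv := vnorm_gt0 hv; have nw := vnorm_gt0 hw.
have ev := vnorm_sq v.
rewrite /cosv /sinv.
have -> : dot u v / (vnorm u * vnorm v) * (cross v w / (vnorm v * vnorm w)) +
  cross u v / (vnorm u * vnorm v) * (dot v w / (vnorm v * vnorm w)) =
  (dot u v * cross v w + cross u v * dot v w) / (vnorm u * vnorm v ^+ 2 * vnorm w).
  field; rewrite !gt_eqF //.
have -> : dot u v * cross v w + cross u v * dot v w = dot v v * cross u w.
  rewrite /dot /cross; ring.
rewrite ev -ev; field; rewrite !gt_eqF //.
Qed.

Lemma sinv_ge0E (R : realType) (u v : R * R) : 0 < dot u u -> 0 < dot v v ->
  (0 <= sinv u v) = (0 <= cross u v).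
Proof.
move=> hu hv; rewrite /sinv pmulr_lge0 // invr_gt0 mulr_gt0 // vnorm_gt0 //.
Qed.

Lemma sinv_gt0E (R : realType) (u v : R * R) : 0 < dot u u -> 0 < dot v v ->
  (0 < sinv u v) = (0 < cross u v).
Proof.
move=> hu hv; rewrite /sinv pmulr_lgt0 // invr_gt0 mulr_gt0 // vnorm_gt0 //.
Qed.

Lemma angleE (R : realType) (Q X Y : R * R) :
  0 < dot (vsub X Q) (vsub X Q) -> 0 < dot (vsub Y Q) (vsub Y Q) ->
  angle Q X Y = acos (cosv (vsub X Q) (vsub Y Q)).
Proof.
move=> hx hy; rewrite /angle /=.
by rewrite !gt_eqF ?vnorm_gt0.
Qed.

Lemma ccwE (R : realType) (Q X Y : R * R) :
  0 < dot (vsub X Q) (vsub X Q) -> 0 < dot (vsub Y Q) (vsub Y Q) ->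
  ccw_angle Q X Y = gccw (cosv (vsub X Q) (vsub Y Q)) (sinv (vsub X Q) (vsub Y Q)).
Proof.
move=> hx hy; rewrite /ccw_angle /gccw angleE // sinv_ge0E //.
Qed.

Lemma angle_sym (R : realType) (Q X Y : R * R) : angle Q X Y = angle Q Y X.
Proof.
rewrite /angle orbC; case: ifP => // _.
by rewrite [dot (vsub Y Q) _]/dot [vnorm (vsub Y Q) * _]mulrC /dot [_.1 * _]mulrC [_.2 * (vsub X Q).2]mulrC.
Qed.

Lemma core_vec (R : realType) (u v w : R * R) :
  0 < dot u u -> 0 < dot v v -> 0 < dot w w ->
  gccw (cosv u v) (sinv u v) = gccw (cosv v w) (sinv v w) ->
  gccw (cosv u v) (sinv u v) < gccw (cosv w u) (sinv w u) ->
  (gccw (cosv u v) (sinv u v) + gccw (cosv v w) (sinv v w) + gccw (cosv w u) (sinv w u) = 2 * pi \/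
   gccw (cosv u w) (sinv u w) + gccw (cosv w v) (sinv w v) + gccw (cosv v u) (sinv v u) != 2 * pi) ->
  [/\ 0 < cross u v, 0 < cross v w, cosv u v = cosv v w & cosv w u < cosv u v].
Proof.
move=> hu hv hw.
have e3 : cosv w u = cosv u v * cosv v w - sinv u v * sinv v w by rewrite cosvC (cosv_trans hu hv hw).
have e4 : sinv w u = - (cosv u v * sinv v w + sinv u v * cosv v w) by rewrite sinvC (sinv_trans hu hv hw).
have e5 : sinv u w = (cosv u v * sinv v w + sinv u v * cosv v w) by rewrite (sinv_trans hu hv hw).
rewrite e3 e4 (cosv_trans hu hv hw) e5 (cosvC v w) (sinvC v w) (sinvC u v) (cosvC u v).
move=> h1 h2 h3.
have := core_num (cs1 hu hv) (cs1 hv hw) h1 h2; rewrite !opprK.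
case/(_ h3) => p1 p2 p3 p4.
by split => //; rewrite -?sinv_gt0E.
Qed.

Lemma poly_lip (R : realType) (p : {poly R}) :
  exists M, 0 <= M /\ forall e, 0 <= e <= 1 -> `|p.[e] - p.[0]| <= M * e.
Proof.
elim/poly_ind: p => [|p c [M [M0 HM]]].
  by exists 0; split => // e _; rewrite !horner0 subrr normr0 mul0r.
exists (`|p.[0]| + M); split; first by rewrite addr_ge0.
move=> e /andP[e0 e1].
rewrite !hornerE. rewrite ?mulr0 ?add0r addrK normrM (ger0_norm e0).
rewrite ler_wpM2r //.
have := HM e; rewrite e0 e1 => /(_ isT) h.
have : `|p.[e]| <= `|p.[0]| + `|p.[e] - p.[0]|.
  by rewrite -[X in `|X|](subrK p.[0]) addrC ler_normD.
have : M * e <= M by rewrite ler_piMr.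
lra.
Qed.

Lemma near0 (R : realType) (s : seq {poly R}) :
  all (fun p => 0 < p.[0]) s ->
  exists2 d, 0 < d & forall e, 0 < e <= d -> all (fun p => 0 < p.[e]) s.
Proof.
elim: s => [|p s IH] /=.
  by move=> _; exists 1 => // e _.
case/andP => hp /IH [d d0 Hd].
have [M [M0 HM]] := poly_lip p.
pose d' := Num.min d (Num.min 1 (p.[0] / (M + 1))).
have hM1 : 0 < M + 1 by lra.
exists d'.
  by rewrite /d' !lt_min d0 ltr01 divr_gt0.
move=> e /andP[e0 ed].
move: ed; rewrite /d' !le_min => /andP[ed /andP[e1 eM]].
rewrite Hd ?e0 ?ed // andbT.
have := HM e; rewrite (ltW e0) e1 => /(_ isT) h.
have h2 : p.[0] - p.[e] <= M * e by apply: le_trans h; rewrite -normrN opprB ler_norm.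
have h3 : (M + 1) * e <= p.[0] by rewrite -ler_pdivlMl // mulrC.
have : M * e < (M + 1) * e by rewrite ltr_pM2r //; lra.
lra.
Qed.

Lemma cot_num (R : realType) (c s c' s' : R) : c ^+ 2 + s ^+ 2 = 1 -> c' ^+ 2 + s' ^+ 2 = 1 ->
  0 < s -> 0 < s' -> c' * s < c * s' -> c' < c.
Proof.
move=> h h' hs hs' hl.
case: (ltP c' c) => // hle; exfalso.
case: (lerP 0 c) => hc.
  have : s' <= s by nra.
  move=> hss. nra.
case: (lerP 0 c') => hc'.
  nra.
have : s <= s' by nra.
move=> hss. nra.
Qed.
Lemma L1 (R : realType) (D c S : R) : 0 <= D -> 0 < S -> D < c * S -> D ^+ 2 < c ^+ 2 * S ^+ 2.
Proof.
move=> hD hS h.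
have : 0 < (c * S - D) * (c * S + D) by rewrite mulr_gt0 //; lra.
have -> : (c * S - D) * (c * S + D) = c ^+ 2 * S ^+ 2 - D ^+ 2 by ring.
lra.
Qed.
Lemma L2 (R : realType) (D c S : R) : D ^+ 2 < c ^+ 2 * S ^+ 2 -> 0 < S -> 0 < c -> D < c * S.
Proof.
move=> hD hS hc; case: (ltP D (c * S)) => // h; exfalso.
have h1 : 0 < c * S by rewrite mulr_gt0.
have : 0 <= (D - c * S) * (D + c * S) by rewrite mulr_ge0 //; lra.
have -> : (D - c * S) * (D + c * S) = D ^+ 2 - c ^+ 2 * S ^+ 2 by ring.
lra.
Qed.
Lemma L3 (R : realType) (D c S : R) : c <= 0 -> 0 < S -> D < c * S -> 0 < - D /\ c ^+ 2 * S ^+ 2 < D ^+ 2.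
Proof.
move=> hc hS hD.
have h1 : c * S <= 0 by rewrite mulr_le0_ge0 // ltW.
have h2 : 0 < - D - c * S by lra.
have h3 : 0 < - D + c * S by lra.
split; first lra.
have : 0 < (- D - c * S) * (- D + c * S) by rewrite mulr_gt0.
have -> : (- D - c * S) * (- D + c * S) = D ^+ 2 - c ^+ 2 * S ^+ 2 by ring.
lra.
Qed.
Lemma L4 (R : realType) (D c S : R) : c <= 0 -> 0 < S -> D < 0 -> c ^+ 2 * S ^+ 2 < D ^+ 2 -> D < c * S.
Proof.
move=> hc hS hD hl; case: (ltP D (c * S)) => // h; exfalso.
have h1 : c * S <= 0 by rewrite mulr_le0_ge0 // ltW.
have : 0 <= (D - c * S) * (- D - c * S) by rewrite mulr_ge0 //; lra.
have -> : (D - c * S) * (- D - c * S) = c ^+ 2 * S ^+ 2 - D ^+ 2 by ring.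
lra.
Qed.

Lemma cross_pos_dot (R : realType) (a b : R * R) : 0 < cross a b -> 0 < dot a a /\ 0 < dot b b.
Proof.
move=> h; have := lagrange a b; have := dot_ge0 a; have := dot_ge0 b.
move: (dot a a) (dot b b) (dot a b) (cross a b) h => A B D C h hb ha e.
split; nra.
Qed.

Lemma cosv_bound (R : realType) (a b : R * R) : 0 < dot a a -> 0 < dot b b ->
  -1 <= cosv a b <= 1.
Proof. by move=> ha hb; apply: (cs_bound (cs1 ha hb)). Qed.

Lemma cot_cmp (R : realType) (a b a' b' : R * R) :
  0 < cross a b -> 0 < cross a' b' ->
  dot a' b' * cross a b < dot a b * cross a' b' -> cosv a' b' < cosv a b.
Proof.
move=> h h' hl.
have [ha hb] := cross_pos_dot h; have [ha' hb'] := cross_pos_dot h'.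
apply: (cot_num (cs1 ha hb) (cs1 ha' hb')); rewrite ?sinv_gt0E //.
have n0 : 0 < vnorm a * vnorm b by rewrite mulr_gt0 ?vnorm_gt0.
have n0' : 0 < vnorm a' * vnorm b' by rewrite mulr_gt0 ?vnorm_gt0.
rewrite /cosv /sinv.
have -> : dot a' b' / (vnorm a' * vnorm b') * (cross a b / (vnorm a * vnorm b)) =
  (dot a' b' * cross a b) / ((vnorm a * vnorm b) * (vnorm a' * vnorm b')).
  by field; rewrite ?mulf_neq0 ?gt_eqF ?vnorm_gt0.
have -> : dot a b / (vnorm a * vnorm b) * (cross a' b' / (vnorm a' * vnorm b')) =
  (dot a b * cross a' b') / ((vnorm a * vnorm b) * (vnorm a' * vnorm b')).
  by field; rewrite ?mulf_neq0 ?gt_eqF ?vnorm_gt0.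
by rewrite ltr_pM2r // invr_gt0 mulr_gt0.
Qed.

Lemma dist_le (R : realType) (P Q : R * R) (r : R) : 0 < r ->
  (dist P Q <= r) = (dot (vsub Q P) (vsub Q P) <= r ^+ 2).
Proof.
move=> r0; rewrite /dist /vnorm.
have h := dot_ge0 (vsub Q P).
apply/idP/idP => H.
  have s0 : 0 <= Num.sqrt (dot (vsub Q P) (vsub Q P)) by rewrite sqrtr_ge0.
  rewrite -(sqr_sqrtr h).
  move: (Num.sqrt _) s0 H => S s0 H. nra.
by rewrite -(@ger0_norm _ r) ?(ltW r0) // -sqrtr_sqr ler_wsqrtr.
Qed.

Definition Qe (R : realType) (Q0 v : R * R) (e : R) : R * R := (Q0.1 + e * v.1, Q0.2 + e * v.2).

Lemma vsubQe (R : realType) (X Q0 v : R * R) e :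
  vsub X (Qe Q0 v e) = ((vsub X Q0).1 - e * v.1, (vsub X Q0).2 - e * v.2).
Proof. rewrite /vsub /Qe /=; congr (_, _); ring. Qed.

Lemma disk_part (R : realType) (P Q0 v : R * R) (r : R) : 0 < r ->
  dot (vsub Q0 P) (vsub Q0 P) <= r ^+ 2 ->
  ~~ ((dot (vsub Q0 P) (vsub Q0 P) == r ^+ 2) && (dot (vsub P Q0) v <= 0)) ->
  exists2 d, 0 < d & forall e, 0 < e <= d -> dist P (Qe Q0 v e) <= r.
Proof.
move=> r0 hds hneg.
set ds := dot (vsub Q0 P) (vsub Q0 P).
set mv := dot (vsub P Q0) v.
have idt : forall e, dot (vsub (Qe Q0 v e) P) (vsub (Qe Q0 v e) P) =
   ds - 2 * e * mv + e ^+ 2 * dot v v.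
  move=> e; rewrite /ds /mv /dot /vsub /Qe /=; ring.
case: (ltP ds (r ^+ 2)) => hlt.
  pose p := (r ^+ 2 - ds)%:P + (2 * mv) *: 'X - (dot v v) *: ('X * 'X).
  have := @near0 _ [:: p]; rewrite /= !andbT.
  have -> : p.[0] = r ^+ 2 - ds by rewrite /p !(hornerD, hornerN, hornerC, hornerZ, hornerX, hornerM); ring.
  case; first by lra.
  move=> d d0 Hd; exists d => // e he.
  have := Hd e he; rewrite ?andbT /p !(hornerD, hornerN, hornerC, hornerZ, hornerX, hornerM) => hp.
  rewrite dist_le // idt -subr_ge0.
  have -> : r ^+ 2 - (ds - 2 * e * mv + e ^+ 2 * dot v v) =
    r ^+ 2 - ds + 2 * mv * e - dot v v * (e * e) by ring.
  lra.
have eds : ds = r ^+ 2 by apply/le_anti/andP; split.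
move: hneg; rewrite -/ds -/mv eds eqxx /= -ltNge => hmv.
pose p := (2 * mv)%:P - (dot v v) *: 'X.
have := @near0 _ [:: p]; rewrite /= !andbT.
have -> : p.[0] = 2 * mv by rewrite /p !(hornerD, hornerN, hornerC, hornerZ, hornerX, hornerM); ring.
case; first by lra.
move=> d d0 Hd; exists d => // e he.
have := Hd e he; rewrite ?andbT /p !(hornerD, hornerN, hornerC, hornerZ, hornerX, hornerM) => hp.
case/andP: he => e0 _.
rewrite dist_le // idt eds.
have : 0 < e * (2 * mv - dot v v * e) by apply: mulr_gt0.
have -> : e * (2 * mv - dot v v * e) = 2 * e * mv - e ^+ 2 * dot v v by ring.
lra.
Qed.

Lemma cert (R : realType) (pA pB pD : {poly R}) (c : R) :
  0 < pA.[0] -> 0 < pB.[0] -> pD.[0] < c * Num.sqrt (pA.[0] * pB.[0]) ->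
  exists2 d, 0 < d & forall e, 0 < e <= d ->
    [/\ 0 < pA.[e], 0 < pB.[e] & pD.[e] < c * Num.sqrt (pA.[e] * pB.[e])].
Proof.
move=> hA hB hD.
have sq : forall x y : R, 0 < x -> 0 < y -> Num.sqrt (x * y) ^+ 2 = x * y.
  by move=> x y hx hy; rewrite sqr_sqrtr // mulr_ge0 // ltW.
have sp : forall x y : R, 0 < x -> 0 < y -> 0 < Num.sqrt (x * y).
  by move=> x y hx hy; rewrite sqrtr_gt0 mulr_gt0.
have S0 := sp _ _ hA hB; have S2 := sq _ _ hA hB.
case: (ltP 0 c) => hc.
  case: (ltP (pD.[0]) 0) => hD0.
    have := @near0 _ [:: - pD; pA; pB]; rewrite /= !andbT hornerN oppr_gt0 hA hB hD0.
    case=> // d d0 Hd; exists d => // e he.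
    have := Hd e he; rewrite /= andbT hornerN oppr_gt0 => /and3P[h1 h2 h3].
    split => //.
    have : 0 <= c * Num.sqrt (pA.[e] * pB.[e]) by apply: mulr_ge0; [exact: ltW | exact: sqrtr_ge0].
    lra.
  have ev1 : forall x, (c ^+ 2 *: (pA * pB) - pD * pD).[x] =
      c ^+ 2 * (pA.[x] * pB.[x]) - pD.[x] ^+ 2.
    by move=> x; rewrite !(hornerD, hornerN, hornerZ, hornerM); ring.
  have h0 := L1 hD0 S0 hD; rewrite S2 in h0.
  have := @near0 _ [:: c ^+ 2 *: (pA * pB) - pD * pD; pA; pB]; rewrite /= !andbT.
  rewrite ev1 hA hB subr_gt0 h0.
  case=> // d d0 Hd; exists d => // e he.
  have := Hd e he; rewrite /= andbT ev1 subr_gt0 => /and3P[h1 h2 h3].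
  split => //; apply: L2 => //; last by apply: sp.
  by rewrite sq.
have ev2 : forall x, (pD * pD - c ^+ 2 *: (pA * pB)).[x] =
    pD.[x] ^+ 2 - c ^+ 2 * (pA.[x] * pB.[x]).
  by move=> x; rewrite !(hornerD, hornerN, hornerZ, hornerM); ring.
have [nD h0] := L3 hc S0 hD; rewrite S2 in h0.
have := @near0 _ [:: - pD; pD * pD - c ^+ 2 *: (pA * pB); pA; pB]; rewrite /= !andbT.
rewrite ev2 hornerN hA hB subr_gt0 h0 nD.
case=> // d d0 Hd; exists d => // e he.
have := Hd e he; rewrite /= andbT ev2 hornerN subr_gt0 => /and4P[h1 h2 h3 h4].
split => //; apply: L4 => //; first by apply: sp.
  lra.
by rewrite sq.
Qed.

Lemma boundary (R : realType) (X Y Z P Q0 : R * R) (r th : R) (mf : R * R -> R) :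
  0 < r -> dist P Q0 <= r ->
  (forall Q, dist P Q <= r -> mf Q <= mf Q0) ->
  mf Q0 <= th ->
  (forall Q, th < angle Q X Y -> th < angle Q Y Z -> th < angle Q Z X -> th < mf Q) ->
  0 < cross (vsub X Q0) (vsub Y Q0) -> 0 < cross (vsub Y Q0) (vsub Z Q0) ->
  cosv (vsub X Q0) (vsub Y Q0) = cosv (vsub Y Q0) (vsub Z Q0) ->
  cosv (vsub Z Q0) (vsub X Q0) < cosv (vsub X Q0) (vsub Y Q0) ->
  th = acos (cosv (vsub X Q0) (vsub Y Q0)) ->
  dot (vsub Q0 P) (vsub Q0 P) = r ^+ 2 /\ dot (vsub P Q0) (vsub Y Q0) <= 0.
Proof.
move=> r0 hQ0 hmax hth hmf hc1 hc2 hcc hc3 eth.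
have hds : dot (vsub Q0 P) (vsub Q0 P) <= r ^+ 2 by rewrite -dist_le.
case: (boolP ((dot (vsub Q0 P) (vsub Q0 P) == r ^+ 2) && (dot (vsub P Q0) (vsub Y Q0) <= 0))).
  by case/andP => /eqP -> ->.
move=> hneg; exfalso.
have [d1 d10 Hd1] := disk_part r0 hds hneg.
set u := vsub X Q0 in hc1 hcc hc3 eth *; set v := vsub Y Q0 in hc1 hc2 hcc hc3 eth Hd1 *.
set w := vsub Z Q0 in hc2 hcc hc3 eth *.
have [hu hv] := cross_pos_dot hc1; have [_ hw] := cross_pos_dot hc2.
set c := cosv u v in hcc hc3 eth.
pose pA := (dot w w)%:P - (2 * dot w v) *: 'X + (dot v v) *: ('X * 'X).
pose pB := (dot u u)%:P - (2 * dot u v) *: 'X + (dot v v) *: ('X * 'X).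
pose pD := (dot w u)%:P - (dot v u + dot w v) *: 'X + (dot v v) *: ('X * 'X).
have evA : forall e, pA.[e] = dot (vsub Z (Qe Q0 v e)) (vsub Z (Qe Q0 v e)).
  move=> e; rewrite /pA !(hornerD, hornerN, hornerC, hornerZ, hornerX, hornerM) vsubQe -/w.
  rewrite /dot /=; ring.
have evB : forall e, pB.[e] = dot (vsub X (Qe Q0 v e)) (vsub X (Qe Q0 v e)).
  move=> e; rewrite /pB !(hornerD, hornerN, hornerC, hornerZ, hornerX, hornerM) vsubQe -/u.
  rewrite /dot /=; ring.
have evD : forall e, pD.[e] = dot (vsub Z (Qe Q0 v e)) (vsub X (Qe Q0 v e)).
  move=> e; rewrite /pD !(hornerD, hornerN, hornerC, hornerZ, hornerX, hornerM) !vsubQe -/u -/w.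
  rewrite /dot /=; ring.
have e0 : forall x : R * R, vsub x (Qe Q0 v 0) = vsub x Q0.
  by move=> x; rewrite vsubQe !mul0r !subr0; case: (vsub x Q0).
have [d2 d20 Hd2] : exists2 d, 0 < d & forall e, 0 < e <= d ->
    [/\ 0 < pA.[e], 0 < pB.[e] & pD.[e] < c * Num.sqrt (pA.[e] * pB.[e])].
  apply: cert; rewrite ?evA ?evB ?evD !e0 -/u -/w //.
  move: hc3; rewrite /cosv vnormM ltr_pdivrMr // sqrtr_gt0 mulr_gt0 //.
pose e := Num.min (2^-1) (Num.min d1 d2).
have he0 : 0 < e by rewrite /e !lt_min d10 d20 invr_gt0 ltr0n.
have [he1 [hed1 hed2]] : e <= 2^-1 /\ e <= d1 /\ e <= d2.
  by rewrite /e !ge_min !lexx !orbT.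
have hlt1 : e < 1 by apply: (le_lt_trans he1); rewrite invf_lt1 // ltr1n.
have hd1 := Hd1 e; rewrite he0 hed1 /= in hd1; have := hd1 isT => {hd1} hdisk.
have [hA hB hD] := Hd2 e (ltac:(by rewrite he0 hed2)).
set Q := Qe Q0 v e in hdisk hA hB hD evA evB evD.
have := hmax Q hdisk.
suff : th < mf Q by lra.
have ev : vsub Y Q = ((1 - e) * v.1, (1 - e) * v.2).
  by rewrite /Q vsubQe -/v; congr (_, _); ring.
have e1 : 0 < 1 - e by lra.
apply: hmf.
- have hcr : 0 < cross (vsub X Q) (vsub Y Q).
    have -> : cross (vsub X Q) (vsub Y Q) = (1 - e) * cross u v.
      by rewrite ev /Q vsubQe -/u /cross /=; ring.
    by rewrite mulr_gt0.
  have [hx hy] := cross_pos_dot hcr.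
  rewrite angleE // eth acos_ltE ?cosv_bound //.
  apply: cot_cmp => //; rewrite -subr_lt0.
  have -> : dot (vsub X Q) (vsub Y Q) * cross u v - dot u v * cross (vsub X Q) (vsub Y Q) =
     - ((1 - e) * e * dot v v * cross u v).
    by rewrite ev /Q vsubQe -/u /cross /dot /=; ring.
  rewrite oppr_lt0 !mulr_gt0 //.
- have hcr : 0 < cross (vsub Y Q) (vsub Z Q).
    have -> : cross (vsub Y Q) (vsub Z Q) = (1 - e) * cross v w.
      by rewrite ev /Q vsubQe -/w /cross /=; ring.
    by rewrite mulr_gt0.
  have [hy hz] := cross_pos_dot hcr.
  rewrite angleE // eth hcc acos_ltE ?cosv_bound //.
  apply: cot_cmp => //; rewrite -subr_lt0.
  have -> : dot (vsub Y Q) (vsub Z Q) * cross v w - dot v w * cross (vsub Y Q) (vsub Z Q) =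
     - ((1 - e) * e * dot v v * cross v w).
    by rewrite ev /Q vsubQe -/w /cross /dot /=; ring.
  rewrite oppr_lt0 !mulr_gt0 //.
- have hz : 0 < dot (vsub Z Q) (vsub Z Q) by rewrite /Q -evA.
  have hx : 0 < dot (vsub X Q) (vsub X Q) by rewrite /Q -evB.
  rewrite angleE // eth acos_ltE ?cosv_bound //.
  by rewrite /cosv vnormM /Q -evA -evB -evD ltr_pdivrMr // sqrtr_gt0 mulr_gt0.
Qed.

Lemma gen0 (R : realType) (S : seq R) : gen S 0.
Proof. by rewrite -(subrr (1 : R)); apply: gen_sub; apply: gen_one. Qed.
Lemma genN (R : realType) (S : seq R) x : gen S x -> gen S (- x).
Proof. by move=> h; rewrite -sub0r; apply: gen_sub => //; apply: gen0. Qed.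
Lemma genD (R : realType) (S : seq R) x y : gen S x -> gen S y -> gen S (x + y).
Proof. by move=> h1 h2; rewrite -[y]opprK; apply: gen_sub => //; apply: genN. Qed.
Lemma gen_nat (R : realType) (S : seq R) n : gen S n%:R.
Proof. elim: n => [|n IH]; first exact: gen0. by rewrite mulrS; apply: genD => //; apply: gen_one. Qed.
Lemma genX (R : realType) (S : seq R) x n : gen S x -> gen S (x ^+ n).
Proof. move=> h; elim: n => [|n IH]; first exact: gen_one. by rewrite exprS; apply: gen_mul. Qed.
Lemma gen_cat (R : realType) (S T : seq R) x : gen S x -> gen (S ++ T) x.
Proof.
elim=> [y hy| |y z _ h1 _ h2|y z _ h1 _ h2|y _ h].
- by apply: gen_mem; rewrite mem_cat hy.
- exact: gen_one.
- exact: gen_sub.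
- exact: gen_mul.
- exact: gen_inv.
Qed.

Ltac gen_tac := repeat match goal with
 | |- gen _ (_ + _) => apply: genD
 | |- gen _ (_ - _) => apply: gen_sub
 | |- gen _ (_ * _) => apply: gen_mul
 | |- gen _ (- _) => apply: genN
 | |- gen _ (_ ^-1) => apply: gen_inv
 | |- gen _ (_ ^+ _) => apply: genX
 | |- gen _ (_ %:R) => apply: gen_nat
 | |- gen _ 0 => apply: gen0
 | |- gen _ 1 => apply: gen_one
 | |- gen _ _ => assumption
 end.


Lemma root_step (R : realType) (S : seq R) (t0 t1 t2 t3 t4 x : R) :
  gen S t0 -> gen S t1 -> gen S t2 -> gen S t3 -> gen S t4 ->
  [|| t0 != 0, t1 != 0, t2 != 0, t3 != 0 | t4 != 0] ->
  t0 + t1 * x + t2 * x ^+ 2 + t3 * x ^+ 3 + t4 * x ^+ 4 = 0 ->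
  exists p : {poly R}, [/\ p != 0, (size p <= 5)%N, (forall i, gen S p`_i) & root p x].
Proof.
move=> g0 g1 g2 g3 g4 hnz hr.
exists (\poly_(i < 5) nth 0 [:: t0; t1; t2; t3; t4] i); split.
- apply/negP => /eqP hp.
  have hc : forall i, (\poly_(i < 5) nth 0 [:: t0; t1; t2; t3; t4] i)`_i = 0 by move=> i; rewrite hp coef0.
  move: (hc 0%N) (hc 1%N) (hc 2%N) (hc 3%N) (hc 4%N); rewrite !coef_poly /= => e0 e1 e2 e3 e4.
  by move: hnz; rewrite e0 e1 e2 e3 e4 eqxx.
- exact: size_poly.
- move=> i; rewrite coef_poly; case: ifP => _; last exact: gen0.
  by case: i => [|[|[|[|[|i]]]]] //=; rewrite nth_nil; exact: gen0.
- rewrite /root horner_poly !big_ord_recr big_ord0 /= add0r expr0 expr1 mulr1.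
  by rewrite hr.
Qed.

Lemma tower2 (R : realType) (S : seq R) (x s d : R) (p : {poly R}) :
  p != 0 -> (size p <= 5)%N -> (forall i, gen S p`_i) -> root p x ->
  gen (rcons S x) d -> 0 <= d -> s = Num.sqrt d -> tower S [:: x; s] true.
Proof.
move=> h1 h2 h3 h4 h5 h6 h7 /=.
right; split => //; split; first by exists p; split.
by left; split => //; exists d; split.
Qed.


Lemma alg_core (R : realType) (S : seq R) (a b l1 l2 p1 p2 k w1 w2 : R) :
  gen S a -> gen S b -> gen S l1 -> gen S l2 -> gen S p1 -> gen S p2 -> gen S k ->
  0 < a ^+ 2 + b ^+ 2 -> k != 0 ->
  a * w1 ^+ 2 - a * w2 ^+ 2 + 2 * b * w1 * w2 - l1 * w1 - l2 * w2 = 0 ->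
  k * (w1 ^+ 2 + w2 ^+ 2) - 2 * p1 * w1 - 2 * p2 * w2 + 1 = 0 ->
  exists xs, [/\ tower S xs true, gen (S ++ xs) w1 & gen (S ++ xs) w2].
Proof.
move=> ga gb gl1 gl2 gp1 gp2 gk hab hk hG hH.
pose d1 := 2 * k * b; pose d0 := - (k * l2 + 2 * a * p2).
pose n2 := 2 * k * a; pose n1 := - (k * l1 + 2 * a * p1); pose n0 := a.
pose D := d1 * w1 + d0; pose N := n2 * w1 ^+ 2 + n1 * w1 + n0.
have hE : w2 * D + N = 0.
  have -> : w2 * D + N = k * (a * w1 ^+ 2 - a * w2 ^+ 2 + 2 * b * w1 * w2 - l1 * w1 - l2 * w2)
     + a * (k * (w1 ^+ 2 + w2 ^+ 2) - 2 * p1 * w1 - 2 * p2 * w2 + 1).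
    by rewrite /D /N /d1 /d0 /n2 /n1 /n0; ring.
  by rewrite hG hH !mulr0 addr0.
have [p [pn0 psz pg pr]] : exists p : {poly R},
    [/\ p != 0, (size p <= 5)%N, (forall i, gen S p`_i) & root p w1].
  case: (eqVneq D 0) => hD.
    case: (eqVneq d1 0) => hd1.
      have hb0 : b = 0.
        move: hd1; rewrite /d1 => /eqP; rewrite !mulf_eq0 (negbTE hk) /= orbF.
        by case/orP => /eqP // h2; move: h2 => /eqP; rewrite pnatr_eq0.
      have ha0 : a != 0.
        apply/negP => /eqP ha0; move: hab; rewrite ha0 hb0 expr0n /= addr0 ltxx //.
      have hN : N = 0 by move: hE; rewrite hD mulr0 add0r.
      apply: (@root_step _ _ n0 n1 n2 0 0); rewrite /n0 /n1 /n2; gen_tac.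
        by rewrite ha0.
      by apply: (etrans _ hN); rewrite /N /n2 /n1 /n0; ring.
    apply: (@root_step _ _ d0 d1 0 0 0); rewrite /d0 /d1; gen_tac.
      by rewrite -/d1 hd1 orbT.
    by apply: (etrans _ hD); rewrite /D /d1 /d0; ring.
  pose t4 := k * (d1 ^+ 2 + n2 ^+ 2).
  pose t3 := k * (2 * d0 * d1 + 2 * n1 * n2) - 2 * p1 * d1 ^+ 2 + 2 * p2 * n2 * d1.
  pose t2 := k * (d0 ^+ 2 + n1 ^+ 2 + 2 * n0 * n2) - 2 * p1 * (2 * d0 * d1)
       + 2 * p2 * (n2 * d0 + n1 * d1) + d1 ^+ 2.
  pose t1 := k * (2 * n0 * n1) - 2 * p1 * d0 ^+ 2 + 2 * p2 * (n1 * d0 + n0 * d1) + 2 * d0 * d1.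
  pose t0 := k * n0 ^+ 2 + 2 * p2 * n0 * d0 + d0 ^+ 2.
  have t4nz : t4 != 0.
    have -> : t4 = 4%:R * k ^+ 3 * (a ^+ 2 + b ^+ 2) by rewrite /t4 /d1 /n2; ring.
    apply: mulf_neq0; last by rewrite gt_eqF.
    by apply: mulf_neq0; [rewrite pnatr_eq0 | exact: expf_neq0].
  apply: (@root_step _ _ t0 t1 t2 t3 t4).
  1-5: by rewrite /t0 /t1 /t2 /t3 /t4 /d0 /d1 /n0 /n1 /n2; gen_tac.
    by rewrite t4nz !orbT.
  rewrite -/d0 -/d1 -/n0 -/n1 -/n2.
  have -> : t0 + t1 * w1 + t2 * w1 ^+ 2 + t3 * w1 ^+ 3 + t4 * w1 ^+ 4 =
    D ^+ 2 * (k * (w1 ^+ 2 + w2 ^+ 2) - 2 * p1 * w1 - 2 * p2 * w2 + 1)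
    + (N + w2 * D) * (k * (N - w2 * D) + 2 * p2 * D).
    by rewrite /t0 /t1 /t2 /t3 /t4 /D /N; ring.
  by rewrite hH mulr0 add0r [N + _]addrC hE mul0r.
pose disc := p2 ^+ 2 - k * (k * w1 ^+ 2 - 2 * p1 * w1 + 1).
have hdisc : disc = (k * w2 - p2) ^+ 2.
  have -> : disc = (k * w2 - p2) ^+ 2 - k * (k * (w1 ^+ 2 + w2 ^+ 2) - 2 * p1 * w1 - 2 * p2 * w2 + 1).
    by rewrite /disc; ring.
  by rewrite hH mulr0 subr0.
pose s := Num.sqrt disc.
have hs : s = `|k * w2 - p2| by rewrite /s hdisc sqrtr_sqr.
have gS : forall z, gen S z -> gen (rcons S w1) z by move=> z hz; rewrite -cats1; apply: gen_cat.
exists [:: w1; s]; split.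
- apply: (@tower2 _ _ _ _ disc p) => //.
    have g1 : gen (rcons S w1) w1 by apply: gen_mem; rewrite mem_rcons inE eqxx.
    have := gS _ gp1; have := gS _ gp2; have := gS _ gk => g2 g3 g4.
    rewrite /disc; gen_tac.
  by rewrite hdisc sqr_ge0.
- by apply: gen_mem; rewrite mem_cat inE eqxx orbT.
- have gs : gen (S ++ [:: w1; s]) s by apply: gen_mem; rewrite mem_cat !inE eqxx !orbT.
  have gp2' := gen_cat [:: w1; s] gp2; have gk' := gen_cat [:: w1; s] gk.
  case: (lerP 0 (k * w2 - p2)) => hsg.
    have -> : w2 = (p2 + s) / k by rewrite hs ger0_norm //; field.
    gen_tac.
  have -> : w2 = (p2 - s) / k by rewrite hs ltr0_norm //; field.
  gen_tac.
Qed.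


Lemma alg_geom (R : realType) (S : seq R) (X Y Z P Q0 : R * R) (r : R) :
  gen S X.1 -> gen S X.2 -> gen S Y.1 -> gen S Y.2 -> gen S Z.1 -> gen S Z.2 ->
  gen S P.1 -> gen S P.2 -> gen S r ->
  0 < cross (vsub X Q0) (vsub Y Q0) -> 0 < cross (vsub Y Q0) (vsub Z Q0) ->
  dot (vsub X Q0) (vsub Y Q0) * cross (vsub Y Q0) (vsub Z Q0) =
    dot (vsub Y Q0) (vsub Z Q0) * cross (vsub X Q0) (vsub Y Q0) ->
  dot (vsub Q0 P) (vsub Q0 P) = r ^+ 2 ->
  dot (vsub P Q0) (vsub Y Q0) <= 0 ->
  computable_deg4 S Q0.
Proof.
move=> gx1 gx2 gy1 gy2 gz1 gz2 gp1 gp2 gr hc1 hc2 hK hd hm.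
pose a1 := X.1 - Y.1; pose a2 := X.2 - Y.2; pose c1 := Z.1 - Y.1; pose c2 := Z.2 - Y.2.
pose p1 := P.1 - Y.1; pose p2 := P.2 - Y.2; pose k := p1 ^+ 2 + p2 ^+ 2 - r ^+ 2.
pose q1 := Q0.1 - Y.1; pose q2 := Q0.2 - Y.2; pose nq := q1 ^+ 2 + q2 ^+ 2.
pose a := - (a1 * c2 + a2 * c1); pose b := a1 * c1 - a2 * c2.
pose l1 := - (a2 + c2); pose l2 := a1 + c1.
have hnq : 0 < nq.
  have [_ hv] := cross_pos_dot hc1.
  by move: hv; rewrite /nq /dot /vsub /q1 /q2 /=; congr (0 < _); ring.
have hA : 0 < a1 ^+ 2 + a2 ^+ 2.
  have : 0 < cross (a1, a2) (vsub Y Q0) by move: hc1; rewrite /cross /vsub /a1 /a2 /=; congr (0 < _); ring.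
  by case/cross_pos_dot; rewrite /dot /= -!expr2.
have hC : 0 < c1 ^+ 2 + c2 ^+ 2.
  have : 0 < cross (vsub Y Q0) (c1, c2) by move: hc2; rewrite /cross /vsub /c1 /c2 /=; congr (0 < _); ring.
  by case/cross_pos_dot => _; rewrite /dot /= -!expr2.
have hab : 0 < a ^+ 2 + b ^+ 2.
  have -> : a ^+ 2 + b ^+ 2 = (a1 ^+ 2 + a2 ^+ 2) * (c1 ^+ 2 + c2 ^+ 2) by rewrite /a /b; ring.
  by rewrite mulr_gt0.
have hk : 0 < k.
  have -> : k = nq - 2 * dot (vsub P Q0) (vsub Y Q0) + (dot (vsub Q0 P) (vsub Q0 P) - r ^+ 2).
    by rewrite /k /nq /p1 /p2 /q1 /q2 /dot /vsub /=; ring.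
  rewrite hd subrr addr0; lra.
pose w1 := q1 / nq; pose w2 := q2 / nq.
have nq0 : nq != 0 by rewrite gt_eqF.
have hG : a * w1 ^+ 2 - a * w2 ^+ 2 + 2 * b * w1 * w2 - l1 * w1 - l2 * w2 = 0.
  have e : (a * w1 ^+ 2 - a * w2 ^+ 2 + 2 * b * w1 * w2 - l1 * w1 - l2 * w2) * nq ^+ 2 =
    - (dot (vsub X Q0) (vsub Y Q0) * cross (vsub Y Q0) (vsub Z Q0) -
    dot (vsub Y Q0) (vsub Z Q0) * cross (vsub X Q0) (vsub Y Q0)).
    rewrite /w1 /w2 /a /b /l1 /l2 /a1 /a2 /c1 /c2 /dot /cross /vsub /=.
    rewrite /nq /q1 /q2. field.
    by move: nq0; rewrite /nq /q1 /q2.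
  move: e; rewrite hK subrr oppr0 => /eqP; rewrite mulf_eq0 expf_eq0 (negbTE nq0) andbF orbF.
  by move/eqP.
have hH : k * (w1 ^+ 2 + w2 ^+ 2) - 2 * p1 * w1 - 2 * p2 * w2 + 1 = 0.
  have e : (k * (w1 ^+ 2 + w2 ^+ 2) - 2 * p1 * w1 - 2 * p2 * w2 + 1) * nq =
    dot (vsub Q0 P) (vsub Q0 P) - r ^+ 2.
    rewrite /w1 /w2 /k /p1 /p2 /dot /vsub /=.
    rewrite /nq /q1 /q2. field.
    by move: nq0; rewrite /nq /q1 /q2.
  move: e; rewrite hd subrr => /eqP; rewrite mulf_eq0 (negbTE nq0) orbF.
  by move/eqP.
have [xs [ht g1 g2]] : exists xs, [/\ tower S xs true, gen (S ++ xs) w1 & gen (S ++ xs) w2].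
  have ga : gen S a by rewrite /a /a1 /a2 /c1 /c2; gen_tac.
  have gb : gen S b by rewrite /b /a1 /a2 /c1 /c2; gen_tac.
  have gl1 : gen S l1 by rewrite /l1 /a2 /c2; gen_tac.
  have gl2 : gen S l2 by rewrite /l2 /a1 /c1; gen_tac.
  have gq1 : gen S p1 by rewrite /p1; gen_tac.
  have gq2 : gen S p2 by rewrite /p2; gen_tac.
  have gk : gen S k by rewrite /k /p1 /p2; gen_tac.
  by apply: (alg_core ga gb gl1 gl2 gq1 gq2 gk) => //; rewrite gt_eqF.
exists xs; split => //.
- have -> : Q0.1 = Y.1 + w1 / (w1 ^+ 2 + w2 ^+ 2).
    rewrite /w1 /w2 /nq /q1 /q2; field.
    by move: nq0; rewrite /nq /q1 /q2.
  have gg := gen_cat xs gy1; gen_tac.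
- have -> : Q0.2 = Y.2 + w2 / (w1 ^+ 2 + w2 ^+ 2).
    rewrite /w1 /w2 /nq /q1 /q2; field.
    by move: nq0; rewrite /nq /q1 /q2.
  have gg := gen_cat xs gy2; gen_tac.
Qed.

Lemma neq_dot (R : realType) (Q X : R * R) : Q <> X -> 0 < dot (vsub X Q) (vsub X Q).
Proof.
move=> hne; rewrite lt_def dot_ge0 andbT; apply/eqP => h; apply: hne.
move: h; rewrite /dot /vsub /= => /eqP; rewrite paddr_eq0 ?sqr_ge0 -?expr2 ?sqr_ge0 //.
rewrite !sqrf_eq0 !subr_eq0 => /andP[/eqP h1 /eqP h2].
by case: Q X h1 h2 => [q1 q2] [x1 x2] /= -> ->.
Qed.

Lemma main_lab (R : realType) (S : seq R) (P A B C Q0 X Y Z : R * R) (r : R) :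
  0 < r -> is_MMA_solution P r A B C Q0 ->
  Q0 <> X -> Q0 <> Y -> Q0 <> Z ->
  (forall Q, min_angle Q A B C <= angle Q X Y) ->
  (forall Q th, th < angle Q X Y -> th < angle Q Y Z -> th < angle Q Z X -> th < min_angle Q A B C) ->
  gen S X.1 -> gen S X.2 -> gen S Y.1 -> gen S Y.2 -> gen S Z.1 -> gen S Z.2 ->
  gen S P.1 -> gen S P.2 -> gen S r ->
  ccw_angle Q0 X Y = ccw_angle Q0 Y Z -> ccw_angle Q0 X Y < ccw_angle Q0 Z X ->
  (ccw_angle Q0 X Y + ccw_angle Q0 Y Z + ccw_angle Q0 Z X = 2 * pi \/
   ccw_angle Q0 X Z + ccw_angle Q0 Z Y + ccw_angle Q0 Y X != 2 * pi) ->
  computable_deg4 S Q0.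
Proof.
move=> r0 [hin hmax] nX nY nZ P1 P2 gx1 gx2 gy1 gy2 gz1 gz2 gp1 gp2 gr h1 h2 h3.
have hu := neq_dot nX; have hv := neq_dot nY; have hw := neq_dot nZ.
move: h1 h2 h3; rewrite !ccwE // => h1 h2 h3.
have [c1 c2 ce c3] := core_vec hu hv hw h1 h2 h3.
set u := vsub X Q0 in hu c1 c2 ce c3 *; set v := vsub Y Q0 in hv c1 c2 ce c3 *.
set w := vsub Z Q0 in hw c1 c2 ce c3 *.
have [hd hm] : dot (vsub Q0 P) (vsub Q0 P) = r ^+ 2 /\ dot (vsub P Q0) (vsub Y Q0) <= 0.
  apply: (boundary (th := acos (cosv u v)) (mf := fun Q => min_angle Q A B C) (Z := Z) (X := X)) => //.
  - by rewrite -angleE //; apply: P1.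
  - by move=> Q; apply: P2.
have hK : dot u v * cross v w = dot v w * cross u v.
  have es : sinv u v = sinv v w.
    apply: sq_eq_pos.
    - have := cs1 hu hv; have := cs1 hv hw; rewrite ce; lra.
    - by apply: ltW; rewrite sinv_gt0E.
    - by apply: ltW; rewrite sinv_gt0E.
  have nu := vnorm_gt0 hu; have nv := vnorm_gt0 hv; have nw := vnorm_gt0 hw.
  have ed1 : dot u v = cosv u v * (vnorm u * vnorm v) by rewrite /cosv divfK // mulf_neq0 // gt_eqF.
  have ed2 : dot v w = cosv v w * (vnorm v * vnorm w) by rewrite /cosv divfK // mulf_neq0 // gt_eqF.
  have ec1 : cross u v = sinv u v * (vnorm u * vnorm v) by rewrite /sinv divfK // mulf_neq0 // gt_eqF.
  have ec2 : cross v w = sinv v w * (vnorm v * vnorm w) by rewrite /sinv divfK // mulf_neq0 // gt_eqF.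
  rewrite ed1 ed2 ec1 ec2 ce es; ring.
exact: (alg_geom gx1 gx2 gy1 gy2 gz1 gz2 gp1 gp2 gr c1 c2 hK hd hm).
Qed.

Ltac p1_tac A B C := let Q := fresh "Q" in move=> Q;
  rewrite /min_angle ?(angle_sym Q B A) ?(angle_sym Q C B) ?(angle_sym Q A C) !ge_min lexx ?orbT //.
Ltac p2_tac A B C := let Q := fresh "Q" in let th := fresh "th" in
  let h1 := fresh "h1" in let h2 := fresh "h2" in let h3 := fresh "h3" in
  move=> Q th h1 h2 h3;
  rewrite ?(angle_sym Q B A) ?(angle_sym Q C B) ?(angle_sym Q A C) in h1 h2 h3;
  by rewrite /min_angle !lt_min h1 h2 h3.

Theorem theorem1 (R : realType) (P A B C Pstar : R * R) (r : R) :
  0 < r ->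
  is_MMA_solution P r A B C Pstar ->
  exactly_two_smallest Pstar A B C ->
  computable_deg4 [:: P.1; P.2; A.1; A.2; B.1; B.2; C.1; C.2; r] Pstar.
Proof.
move=> r0 hsol [nA nB nC hc].
set S := [:: P.1; P.2; A.1; A.2; B.1; B.2; C.1; C.2; r].
have gP1 : gen S P.1 by apply: gen_mem; rewrite !inE eqxx ?orbT.
have gP2 : gen S P.2 by apply: gen_mem; rewrite !inE eqxx ?orbT.
have gA1 : gen S A.1 by apply: gen_mem; rewrite !inE eqxx ?orbT.
have gA2 : gen S A.2 by apply: gen_mem; rewrite !inE eqxx ?orbT.
have gB1 : gen S B.1 by apply: gen_mem; rewrite !inE eqxx ?orbT.
have gB2 : gen S B.2 by apply: gen_mem; rewrite !inE eqxx ?orbT.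
have gC1 : gen S C.1 by apply: gen_mem; rewrite !inE eqxx ?orbT.
have gC2 : gen S C.2 by apply: gen_mem; rewrite !inE eqxx ?orbT.
have gr : gen S r by apply: gen_mem; rewrite !inE eqxx ?orbT.
move: hc; rewrite /consecutive_angles; case: ifP => hsum /=.
  move/eqP: hsum => hsum.
  case=> [[e lt]|[[e lt]|[e lt]]].
  - apply: (@main_lab R S P A B C Pstar A B C r r0 hsol) => //; [p1_tac A B C | p2_tac A B C | by left].
  - apply: (@main_lab R S P A B C Pstar B C A r r0 hsol) => //; [p1_tac A B C | p2_tac A B C | left; lra].
  - apply: (@main_lab R S P A B C Pstar C A B r r0 hsol) => //; [p1_tac A B C | p2_tac A B C | left; lra].
move/negbT: hsum => hsum.
case=> [[e lt]|[[e lt]|[e lt]]].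
- apply: (@main_lab R S P A B C Pstar A C B r r0 hsol) => //; [p1_tac A B C | p2_tac A B C | by right].
- apply: (@main_lab R S P A B C Pstar C B A r r0 hsol) => //; [p1_tac A B C | p2_tac A B C | right].
  set a := ccw_angle Pstar A B in hsum *; set b := ccw_angle Pstar B C in hsum *.
  set c := ccw_angle Pstar C A in hsum *.
  by have -> : c + a + b = a + b + c by ring.
- apply: (@main_lab R S P A B C Pstar B A C r r0 hsol) => //; [p1_tac A B C | p2_tac A B C | right].
  set a := ccw_angle Pstar A B in hsum *; set b := ccw_angle Pstar B C in hsum *.
  set c := ccw_angle Pstar C A in hsum *.
  by have -> : b + c + a = a + b + c by ring.
Qed.
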